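(* Consider the protocol: for $t=1,\ldots,T$, the adversary reveals $\boldsymbol v_t\in\mathbb{R}^d$, the learner chooses $\boldsymbol w_t\in\mathbb{R}^d$ and predicts $\boldsymbol w_t^T\boldsymbol v_t$, the adversary reveals a loss $f_t(\boldsymbol w)=\ell_t(\boldsymbol w^T\boldsymbol v_t)$, and the learner suffers $\ell_t(\boldsymbol w_t^T\boldsymbol v_t)$. Let $B>0$ and $\mathcal{K}=\{\boldsymbol w\in\mathbb{R}^d:\ |\boldsymbol w^T\boldsymbol v_t|\le B\ \forall t\in[T]\}$. Suppose the $f_t$ are $\alpha$-exp-concave and $G$-Lipschitz, and the $\ell_t$ are Lipschitz smooth. Running FLH with learning rate $\zeta=\alpha$ and base learners $E^j$ being instances of the invariant Online Newton Step algorithm of Luo, Agarwal, Cesa-Bianchi and Langford (2016) started at time $j$ yields, for every comparator sequence $\boldsymbol z_1,\ldots,\boldsymbol z_T\in\mathcal{K}$, $$\sum_{t=1}^T\big(f_t(\boldsymbol w_t)-f_t(\boldsymbol z_t)\big)=\tilde O\big(d\sqrt{TV_T}\vee d^2\big),$$ where $V_T=\sum_{t=2}^T\|\boldsymbol z_t-\boldsymbol z_{t-1}\|$ and $\tilde O$ hides dependence on $G,\alpha$ and polylogarithmic factors of $T$.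
   Context: $f$ is $\alpha$-exp-concave if $f(\boldsymbol y)\ge f(\boldsymbol x)+(\boldsymbol y-\boldsymbol x)^T\nabla f(\boldsymbol x)+\frac\alpha2((\boldsymbol y-\boldsymbol x)^T\nabla f(\boldsymbol x))^2$; $G$-Lipschitz means $|f(\boldsymbol x)-f(\boldsymbol y)|\le G\|\boldsymbol x-\boldsymbol y\|$ (Euclidean norm). $a\vee b=\max\{a,b\}$. FLH with learning rate $\zeta$ and base learners $E^1,\ldots,E^T$: maintain a probability vector $v_t\in\mathbb{R}^t$ with $v_1^{(1)}=1$; at round $t$ let $x_t^{(j)}$ be the prediction of $E^j$ for $j\le t$ and play $x_t=\sum_{j=1}^t v_t^{(j)}x_t^{(j)}$; after observing $f_t$ set $\hat v_{t+1}^{(i)}=v_t^{(i)}e^{-\zeta f_t(x_t^{(i)})}/\sum_{j=1}^t v_t^{(j)}e^{-\zeta f_t(x_t^{(j)})}$ for $i\le t$, then $v_{t+1}^{(t+1)}=1/(t+1)$ and $v_{t+1}^{(i)}=(1-(t+1)^{-1})\hat v_{t+1}^{(i)}$ for $i\le t$. The invariant ONS base learner has static regret $O(d^2\log T)$ against $\mathcal{K}$ under these assumptions. *)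

(* Defs.v *)
From HB Require Import structures.
From mathcomp Require Import all_boot all_order all_algebra.
From mathcomp Require Import all_classical all_reals all_analysis.
Set Implicit Arguments. Unset Strict Implicit. Unset Printing Implicit Defensive.
Import Order.TTheory GRing.Theory Num.Theory.
Import numFieldNormedType.Exports.
Local Open Scope ring_scope.

Section Defs.
Variables (R : realType) (d : nat).
Notation vec := 'rV[R]_d.

Definition dotv (u w : vec) : R := \sum_(i < d) u 0 i * w 0 i.
Definition normv (u : vec) : R := Num.sqrt (dotv u u).

Definition lossf (ell : nat -> R -> R) (v : nat -> vec) (t : nat) (w : vec) : R :=
  ell t (dotv w (v t)).
Definition gradf (ell : nat -> R -> R) (v : nat -> vec) (t : nat) (w : vec) : vec :=
  (derive1 (ell t) (dotv w (v t))) *: v t.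

Definition slab (B : R) (vt : vec) (w : vec) : Prop := `|dotv w vt| <= B.

Definition Kset (B : R) (T : nat) (v : nat -> vec) (w : vec) : Prop :=
  forall t, (1 <= t <= T)%N -> `|dotv w (v t)| <= B.

Definition exp_concave_dom (alpha : R) (f : vec -> R) (gf : vec -> vec)
  (D : vec -> Prop) : Prop :=
  forall x y, D x -> D y ->
    f x + dotv (y - x) (gf x) + alpha / 2 * (dotv (y - x) (gf x)) ^+ 2 <= f y.

Definition lip_on_norm (G : R) (f : vec -> R) (D : vec -> Prop) : Prop :=
  forall x y, D x -> D y -> `|f x - f y| <= G * normv (x - y).

(* Rounds are numbered 1,2,...; [xb j t] is the prediction of base
   learner E^j at round t (j <= t); [f t] is the loss of round t.
   [flh_weights zeta f xb t j] is v_t^{(j)} (for 1 <= j <= t; 0 otherwise). *)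
Fixpoint flh_weights (zeta : R) (f : nat -> vec -> R) (xb : nat -> nat -> vec)
  (t : nat) : nat -> R :=
  match t with
  | 0 => fun _ => 0
  | s.+1 =>
    let w := flh_weights zeta f xb s in
    if s == 0%N then (fun j => if j == 1%N then 1 else 0)
    else fun i =>
      if i == s.+1 then (s.+1)%:R^-1
      else if (1 <= i <= s)%N then
        (1 - (s.+1)%:R^-1) *
        (w i * expR (- zeta * f s (xb i s)) /
         \sum_(1 <= j < s.+1) w j * expR (- zeta * f s (xb j s)))
      else 0
  end.

Definition flh_play (zeta : R) (f : nat -> vec -> R) (xb : nat -> nat -> vec)
  (t : nat) : vec :=
  \sum_(1 <= j < t.+1) flh_weights zeta f xb t j *: xb j t.

Definition path_length (z : nat -> vec) (T : nat) : R :=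
  \sum_(2 <= t < T.+1) normv (z t - z t.-1).

End Defs.

(* Main.v *)
Require Import Defs.
From HB Require Import structures.
From mathcomp Require Import all_boot all_order all_algebra.
From mathcomp Require Import all_classical all_reals all_analysis.
From mathcomp Require Import ring lra.
Import Order.TTheory GRing.Theory Num.Theory.
Import numFieldNormedType.Exports.
Local Open Scope ring_scope.

Section A.
Variable R : realType.
Lemma is_derive_expR_comp (f : R -> R) (x df : R) :
  is_derive x 1 f df -> is_derive x 1 (fun y => expR (f y)) (expR (f x) * df).
Proof.
move=> hf.
exact: (@is_derive1_comp R expR f x (expR (f x)) df (is_derive_expR _) hf).
Qed.

Lemma mono_from_deriv (g dg : R -> R) :
  (forall y : R, is_derive y 1 g (dg y)) -> (forall y, 0 <= dg y) ->
  forall a b : R, a <= b -> g a <= g b.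
Proof.
move=> hd hpos a b ab.
have [|c _ e] := MVT_segment ab (fun y _ => hd y).
  apply/continuous_subspaceT=> r.
  have [dr _] := hd r.
  move/derivable1_diffP: dr.
  exact: differentiable_continuous.
by rewrite -subr_ge0 e; apply: mulr_ge0 => //; rewrite subr_ge0.
Qed.

Lemma pade_g_deriv (y : R) :
  is_derive y 1 (fun z => (2 + z) * expR (- z) + z) (1 - (1 + y) * expR (- y)).
Proof.
have hN : is_derive y 1 (fun z : R => - z) (-1) by apply: is_derive_eq.
have hE := is_derive_expR_comp _ _ _ hN.
have h2 : is_derive y 1 (fun z : R => 2 + z) (0 + 1) :=
  is_deriveD (is_derive_cst (2:R) y 1) (is_derive_id y 1).
have hM : is_derive y 1 (fun z : R => (2 + z) * expR (- z)) _ := is_deriveM h2 hE.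
have hD : is_derive y 1 (fun z : R => (2 + z) * expR (- z) + z) _ := is_deriveD hM (is_derive_id y 1).
apply: is_derive_eq.
change ((2 + y) * (expR (- y) * -1) + expR (- y) * (0 + 1) + 1 = 1 - (1 + y) * expR (- y)).
ring.
Qed.

Lemma pade (x : R) :
  (0 <= x -> expR x * (2 - x) <= 2 + x) /\ (x <= 0 -> 2 + x <= expR x * (2 - x)).
Proof.
have hpos : forall y : R, 0 <= 1 - (1 + y) * expR (- y).
  move=> y; rewrite subr_ge0.
  have h := expR_ge1Dx y.
  have e : expR y * expR (- y) = 1 by rewrite expRxMexpNx_1.
  have p : 0 < expR (- y) by exact: expR_gt0.
  nra.
have mono := mono_from_deriv _ (fun y => 1 - (1 + y) * expR (- y)) pade_g_deriv hpos.
have e : expR x * expR (- x) = 1 by rewrite expRxMexpNx_1.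
have p : 0 < expR x by exact: expR_gt0.
have g0 : (2 + 0) * expR (- 0) + 0 = 2 :> R by rewrite oppr0 expR0; ring.
split => hx.
- have := mono _ _ hx; rewrite g0 => h.
  have h' : expR x * 2 <= expR x * ((2 + x) * expR (- x) + x).
    by apply: ler_wpM2l; [exact: ltW|].
  nra.
- have := mono _ _ hx; rewrite g0 => h.
  have h' : expR x * ((2 + x) * expR (- x) + x) <= expR x * 2.
    by apply: ler_wpM2l; [exact: ltW|].
  nra.
Qed.

Lemma key_poly (A B D : R) :
  A + A^+2/2 <= D -> D <= B - B^+2/2 -> A * (2 + D) <= B * (2 - D).
Proof.
move=> h1 h2.
have hp0 : 0 <= 1 + 2 * D.
  have : 0 <= (1 + A)^+2 by exact: sqr_ge0.
  lra.
have hq0 : 0 <= 1 - 2 * D.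
  have : 0 <= (1 - B)^+2 by exact: sqr_ge0.
  lra.
set p := Num.sqrt (1 + 2 * D).
set q := Num.sqrt (1 - 2 * D).
have p0 : 0 <= p by exact: sqrtr_ge0.
have q0 : 0 <= q by exact: sqrtr_ge0.
have pp : p ^+ 2 = 1 + 2 * D by rewrite sqr_sqrtr.
have qq : q ^+ 2 = 1 - 2 * D by rewrite sqr_sqrtr.
have hA : A <= p - 1.
  have h : (1 + A) ^+ 2 <= p ^+ 2 by rewrite pp; lra.
  nra.
have hB : 1 - q <= B.
  have h : (1 - B) ^+ 2 <= q ^+ 2 by rewrite qq; lra.
  nra.
have Dlo : -1/2 <= D by lra.
have Dhi : D <= 1/2 by lra.
have key : (p - 1) * (2 + D) <= (1 - q) * (2 - D).
  have eD : D = (p^+2 - q^+2) / 4 by rewrite pp qq; field.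
  have e2 : p^+2 + q^+2 - 2 = 0 by rewrite pp qq; ring.
  have h0 : 0 <= (p + q - 2)^+2 * (p + q + 4).
    by apply: mulr_ge0; [exact: sqr_ge0| lra].
  have hid : 4 * ((1 - q) * (2 - (p^+2 - q^+2) / 4) - (p - 1) * (2 + (p^+2 - q^+2) / 4)) =
     (p + q - 2)^+2 * (p + q + 4) - 2 * (p^+2 + q^+2 - 2) * (p + q).
    by field.
  rewrite -eD in hid.
  rewrite e2 mulr0 mul0r subr0 in hid.
  lra.
have e1 : A * (2 + D) <= (p - 1) * (2 + D) by apply: ler_wpM2r; lra.
have e3 : (1 - q) * (2 - D) <= B * (2 - D) by apply: ler_wpM2r; lra.
lra.
Qed.

Lemma MVT_all (g dg : R -> R) (a b : R) :
  (forall y : R, is_derive y 1 g (dg y)) -> a <= b ->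
  exists c, [/\ a <= c, c <= b & g b - g a = dg c * (b - a)].
Proof.
move=> hd ab.
have [|c cab e] := MVT_segment ab (fun y _ => hd y).
  apply/continuous_subspaceT=> r.
  have [dr _] := hd r.
  move/derivable1_diffP: dr.
  exact: differentiable_continuous.
exists c; split => //; move: cab; rewrite in_itv /= => /andP[] //.
Qed.

Lemma D_mono (l dl : R -> R) (alpha B : R) : 0 < alpha ->
  (forall p q, `|p| <= B -> `|q| <= B ->
     l p + (q - p) * dl p + alpha / 2 * ((q - p) * dl p) ^+ 2 <= l q) ->
  forall a b, `|a| <= B -> `|b| <= B -> a <= b ->
  dl a * expR (- alpha * l a) <= dl b * expR (- alpha * l b).
Proof.
move=> ha H a b aB bB ab.
case: (eqVneq a b) => [->|nab]; first by [].
have hab : a < b by rewrite lt_neqAle nab.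
set h := b - a.
have hp : 0 < h by rewrite /h subr_gt0.
set A := alpha * dl a * h.
set Bq := alpha * dl b * h.
set Dl := alpha * (l b - l a).
have H1 : A + A^+2/2 <= Dl.
  have := H a b aB bB; rewrite -/h => e.
  have e' : alpha * (l a + h * dl a + alpha / 2 * (h * dl a) ^+ 2) <= alpha * l b.
    by apply: ler_wpM2l => //; exact: ltW.
  rewrite /A /Dl.
  have -> : alpha * dl a * h + (alpha * dl a * h) ^+ 2 / 2 =
     alpha * (l a + h * dl a + alpha / 2 * (h * dl a) ^+ 2) - alpha * l a by field.
  lra.
have H2 : Dl <= Bq - Bq^+2/2.
  have := H b a bB aB => e.
  have e' : alpha * (l b + (a - b) * dl b + alpha / 2 * ((a - b) * dl b) ^+ 2) <= alpha * l a.
    by apply: ler_wpM2l => //; exact: ltW.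
  rewrite /Bq /Dl /h.
  have -> : alpha * dl b * (b - a) - (alpha * dl b * (b - a)) ^+ 2 / 2 =
     - (alpha * (l b + (a - b) * dl b + alpha / 2 * ((a - b) * dl b) ^+ 2) - alpha * l b) by field.
  lra.
have K := key_poly _ _ _ H1 H2.
set E := expR Dl.
have E0 : 0 < E by exact: expR_gt0.
have [P1 P2] := pade Dl.
have AE : A * E <= Bq.
  have sqB : Bq - Bq^+2/2 <= 1/2.
    have := sqr_ge0 (Bq - 1).
    have -> : (Bq - 1)^+2 = Bq^+2 - 2 * Bq + 1 by ring.
    lra.
  have sqA : -1/2 <= A + A^+2/2.
    have := sqr_ge0 (A + 1).
    have -> : (A + 1)^+2 = A^+2 + 2 * A + 1 by ring.
    lra.
  have finish : A * (E * (2 - Dl)) <= A * (2 + Dl) -> Dl < 2 -> A * E <= Bq.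
    move=> s1 lt2.
    have t : (A * E - Bq) * (2 - Dl) <= 0.
      have -> : (A * E - Bq) * (2 - Dl) = A * (E * (2 - Dl)) - Bq * (2 - Dl) by ring.
      lra.
    move: t; rewrite pmulr_lle0; last by lra.
    lra.
  case: (lerP 0 Dl) => hD.
  - have P := P1 hD.
    case: (lerP 0 A) => hA.
    + apply: finish; last by lra.
      by apply: ler_wpM2l.
    + have hB : 0 <= Bq.
        have := sqr_ge0 Bq; lra.
      have : A * E <= 0 by apply: mulr_le0_ge0; [exact: ltW| exact: ltW].
      lra.
  - have P := P2 (ltW hD).
    have hA : A <= 0.
      have := sqr_ge0 A; lra.
    apply: finish; last by lra.
    by apply: ler_wnM2l.
have eE : E * expR (- alpha * l b) = expR (- alpha * l a).
  by rewrite /E -expRD /Dl; congr expR; ring.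
have Eb : 0 < expR (- alpha * l b) by exact: expR_gt0.
have s2 : A * E * expR (- alpha * l b) <= Bq * expR (- alpha * l b).
  by apply: ler_wpM2r => //; exact: ltW.
rewrite -mulrA eE /A /Bq in s2.
have ah : 0 < alpha * h by exact: mulr_gt0.
rewrite -(ler_pM2l ah).
have -> : alpha * h * (dl a * expR (- alpha * l a)) = alpha * dl a * h * expR (- alpha * l a) by ring.
have -> : alpha * h * (dl b * expR (- alpha * l b)) = alpha * dl b * h * expR (- alpha * l b) by ring.
exact: s2.
Qed.

Lemma psi_concave (l dl : R -> R) (alpha B : R) : 0 < alpha ->
  (forall y : R, is_derive y 1 l (dl y)) ->
  (forall p q, `|p| <= B -> `|q| <= B ->
     l p + (q - p) * dl p + alpha / 2 * ((q - p) * dl p) ^+ 2 <= l q) ->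
  forall p q, `|p| <= B -> `|q| <= B ->
  expR (- alpha * l q) <= expR (- alpha * l p) * (1 - alpha * ((q - p) * dl p)).
Proof.
move=> ha hd H p q pB qB.
have DM := D_mono _ _ _ _ ha H.
have hpsi : forall y : R, is_derive y 1 (fun z => expR (- alpha * l z))
                    (expR (- alpha * l y) * (- alpha * dl y)).
  move=> yy.
  exact: (is_derive_expR_comp _ _ _ (is_deriveZ (- alpha) (hd yy))).
have inB : forall c, `|p| <= B -> `|q| <= B -> Num.min p q <= c -> c <= Num.max p q -> `|c| <= B.
  move=> c h1 h2 h3 h4.
  move: h1 h2; rewrite !ler_norml => /andP[h1 h1'] /andP[h2 h2'].
  apply/andP; split.
    apply: le_trans h3; rewrite le_min; apply/andP; split => //.
  apply: le_trans h4 _; rewrite ge_max; apply/andP; split => //.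
case: (lerP p q) => pq.
- have [c [pc cq e]] := MVT_all _ _ p q hpsi pq.
  have cB : `|c| <= B.
    apply: inB => //; first by rewrite ge_min pc.
    by rewrite le_max cq orbT.
  have := DM p c pB cB pc => m.
  have hqp : 0 <= q - p by rewrite subr_ge0.
  have : expR (- alpha * l c) * (- alpha * dl c) * (q - p) <=
         expR (- alpha * l p) * (- alpha * dl p) * (q - p).
    apply: ler_wpM2r => //.
    have -> : expR (- alpha * l c) * (- alpha * dl c) = - alpha * (dl c * expR (- alpha * l c)) by ring.
    have -> : expR (- alpha * l p) * (- alpha * dl p) = - alpha * (dl p * expR (- alpha * l p)) by ring.
    by apply: ler_wnM2l => //; rewrite oppr_le0; exact: ltW.
  rewrite -e => h.
  have -> : expR (- alpha * l p) * (1 - alpha * ((q - p) * dl p)) =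
      expR (- alpha * l p) + expR (- alpha * l p) * (- alpha * dl p) * (q - p) by ring.
  lra.
- have qp := ltW pq.
  have [c [qc cp e]] := MVT_all _ _ q p hpsi qp.
  have cB : `|c| <= B.
    apply: inB => //; first by rewrite ge_min qc orbT.
    by rewrite le_max cp.
  have := DM c p cB pB cp => m.
  have hqp : 0 <= p - q by rewrite subr_ge0.
  have : expR (- alpha * l p) * (- alpha * dl p) * (p - q) <=
         expR (- alpha * l c) * (- alpha * dl c) * (p - q).
    apply: ler_wpM2r => //.
    have -> : expR (- alpha * l c) * (- alpha * dl c) = - alpha * (dl c * expR (- alpha * l c)) by ring.
    have -> : expR (- alpha * l p) * (- alpha * dl p) = - alpha * (dl p * expR (- alpha * l p)) by ring.
    by apply: ler_wnM2l => //; rewrite oppr_le0; exact: ltW.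
  rewrite -e => h.
  have -> : expR (- alpha * l p) * (1 - alpha * ((q - p) * dl p)) =
      expR (- alpha * l p) - expR (- alpha * l p) * (- alpha * dl p) * (p - q) by ring.
  lra.
Qed.

End A.
Section V.
Context {R : realType} {d : nat}.
Notation vec := 'rV[R]_d.
Implicit Types (u w a b : vec).

Lemma dotvC u w : dotv u w = dotv w u.
Proof. by rewrite /dotv; apply: eq_bigr => i _; rewrite mulrC. Qed.

Lemma dotvDl a b w : dotv (a + b) w = dotv a w + dotv b w.
Proof. by rewrite /dotv -big_split /=; apply: eq_bigr => i _; rewrite !mxE mulrDl. Qed.

Lemma dotvZl (k : R) a w : dotv (k *: a) w = k * dotv a w.
Proof. by rewrite /dotv mulr_sumr; apply: eq_bigr => i _; rewrite !mxE mulrA. Qed.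

Lemma dotvNl a w : dotv (- a) w = - dotv a w.
Proof. by rewrite -scaleN1r dotvZl mulN1r. Qed.

Lemma dotvBl a b w : dotv (a - b) w = dotv a w - dotv b w.
Proof. by rewrite dotvDl dotvNl. Qed.

Lemma dotv0l w : dotv 0 w = 0.
Proof. by rewrite /dotv big1 // => i _; rewrite mxE mul0r. Qed.

Lemma dotvDr a b w : dotv w (a + b) = dotv w a + dotv w b.
Proof. by rewrite dotvC dotvDl !(dotvC w). Qed.
Lemma dotvZr (k : R) a w : dotv w (k *: a) = k * dotv w a.
Proof. by rewrite dotvC dotvZl dotvC. Qed.
Lemma dotvBr a b w : dotv w (a - b) = dotv w a - dotv w b.
Proof. by rewrite dotvC dotvBl !(dotvC w). Qed.

Lemma dotv_suml (I : Type) (r : seq I) (P : pred I) (F : I -> vec) w :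
  dotv (\sum_(i <- r | P i) F i) w = \sum_(i <- r | P i) dotv (F i) w.
Proof. exact: (big_morph (fun u => dotv u w) (fun a b => dotvDl a b w) (dotv0l w)). Qed.

Lemma dotv_ge0 u : 0 <= dotv u u.
Proof. by apply: sumr_ge0 => i _; rewrite -expr2 sqr_ge0. Qed.

Lemma cauchy_schwarz u w : dotv u w ^+ 2 <= dotv u u * dotv w w.
Proof.
have q : forall l : R, 0 <= dotv u u - 2 * l * dotv u w + l ^+ 2 * dotv w w.
  move=> l; have := dotv_ge0 (u - l *: w).
  rewrite !dotvBl !dotvBr !dotvZl !dotvZr (dotvC w u).
  by have -> : dotv u u - l * dotv u w - (l * dotv u w - l * (l * dotv w w)) =
    dotv u u - 2 * l * dotv u w + l ^+ 2 * dotv w w by ring.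
have uu := dotv_ge0 u; have ww := dotv_ge0 w.
case: (eqVneq (dotv w w) 0) => [w0|wn0].
  case: (eqVneq (dotv u w) 0) => [->|uwn0]; first by rewrite expr0n /= mulr_ge0.
  have := q ((dotv u u + 1) / (2 * dotv u w)).
  rewrite w0 mulr0 addr0.
  have -> : 2 * ((dotv u u + 1) / (2 * dotv u w)) * dotv u w = dotv u u + 1 by field.
  lra.
have wp : 0 < dotv w w by rewrite lt_neqAle eq_sym wn0 ww.
have := q (dotv u w / dotv w w).
have -> : dotv u u - 2 * (dotv u w / dotv w w) * dotv u w + (dotv u w / dotv w w) ^+ 2 * dotv w w
   = (dotv u u * dotv w w - dotv u w ^+ 2) / dotv w w by field.
rewrite pmulr_lge0 ?invr_gt0 //; lra.
Qed.

Lemma normv_ge0 u : 0 <= normv u.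
Proof. exact: sqrtr_ge0. Qed.

Lemma normv_sqr u : normv u ^+ 2 = dotv u u.
Proof. by rewrite /normv sqr_sqrtr // dotv_ge0. Qed.

Lemma dotv_le_norm u w : dotv u w <= normv u * normv w.
Proof.
have h := cauchy_schwarz u w.
rewrite -!normv_sqr in h.
have n1 := normv_ge0 u; have n2 := normv_ge0 w.
have : dotv u w ^+ 2 <= (normv u * normv w) ^+ 2 by rewrite exprMn.
move=> h2; have p := mulr_ge0 n1 n2; nra.
Qed.

Lemma normvD a b : normv (a + b) <= normv a + normv b.
Proof.
rewrite /normv.
have na := normv_ge0 a; have nb := normv_ge0 b.
rewrite -[X in _ <= X]ger0_norm ?addr_ge0 // -sqrtr_sqr.
apply: ler_wsqrtr.
rewrite dotvDl !dotvDr (dotvC b a).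
have := dotv_le_norm a b.
rewrite -/(normv a) -/(normv b).
have := normv_sqr a; have := normv_sqr b.
move=> e1 e2 h.
have -> : (normv a + normv b) ^+ 2 = normv a ^+ 2 + normv b ^+ 2 + 2 * (normv a * normv b) by ring.
rewrite e1 e2; lra.
Qed.

Lemma normvN a : normv (- a) = normv a.
Proof. by rewrite /normv dotvNl dotvC dotvNl opprK. Qed.

Lemma normvB a b : normv (a - b) = normv (b - a).
Proof. by rewrite -normvN opprB. Qed.

End V.

Section C.
Context {R : realType} {d : nat}.
Notation vec := 'rV[R]_d.

Lemma vec_expconc (l : R -> R) (v : vec) (alpha B : R) :
  0 < alpha -> (forall x : R, derivable l x 1) ->
  exp_concave_dom alpha (fun w => l (dotv w v)) (fun w => derive1 l (dotv w v) *: v) (slab B v) ->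
  forall x y, slab B v x -> slab B v y ->
  expR (- alpha * l (dotv y v)) <=
    expR (- alpha * l (dotv x v)) * (1 - alpha * dotv (y - x) (derive1 l (dotv x v) *: v)).
Proof.
move=> ha hder H x y sx sy.
rewrite dotvZr dotvBl.
case: (eqVneq (dotv v v) 0) => [c0|cn0].
  have z : forall w : vec, dotv w v = 0.
    move=> w; have := cauchy_schwarz w v; rewrite c0 mulr0 => h.
    have := sqr_ge0 (dotv w v) => h2.
    by apply/eqP; rewrite -sqrf_eq0 eq_le h h2.
  rewrite !z subrr mulr0 mulr0 subr0 mulr1; exact: lexx.
have cp : 0 < dotv v v by rewrite lt_neqAle eq_sym cn0 dotv_ge0.
have hd : forall y : R, is_derive y 1 l (derive1 l y).
  by move=> z; rewrite derive1E; apply: derivableP.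
have H1 : forall p q : R, `|p| <= B -> `|q| <= B ->
     l p + (q - p) * derive1 l p + alpha / 2 * ((q - p) * derive1 l p) ^+ 2 <= l q.
  move=> p q pB qB.
  have ep : dotv ((p / dotv v v) *: v) v = p by rewrite dotvZl -mulrA mulVf ?mulr1.
  have eq : dotv ((q / dotv v v) *: v) v = q by rewrite dotvZl -mulrA mulVf ?mulr1.
  have := H _ _ (_ : slab B v ((p / dotv v v) *: v)) (_ : slab B v ((q / dotv v v) *: v)).
  rewrite /slab ep eq => /(_ pB qB).
  by rewrite dotvZr dotvBl ep eq mulrC.
have := psi_concave _ _ _ _ _ ha hd H1 _ _ sx sy.
by rewrite [X in _ * (1 - alpha * X)]mulrC.
Qed.

End C.


Section D.
Context {R : realType} {d : nat}.
Notation vec := 'rV[R]_d.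
Variables (alpha : R) (ell : nat -> R -> R) (v : nat -> vec) (xb : nat -> nat -> vec).
Notation F := (lossf ell v).
Notation W := (flh_weights alpha F xb).
Definition ee t j := expR (- alpha * F t (xb j t)).
Definition ZZ t := \sum_(1 <= j < t.+1) W t j * ee t j.

Lemma W1 j : W 1 j = if j == 1%N then 1 else 0.
Proof. by []. Qed.

Lemma WS s i : (1 <= s)%N -> W s.+1 i =
  if i == s.+1 then (s.+1)%:R^-1
  else if (1 <= i <= s)%N then (1 - (s.+1)%:R^-1) * (W s i * ee s i / ZZ s) else 0.
Proof. by case: s => // s _. Qed.

Lemma W_prop t : (1 <= t)%N ->
  (forall j, (1 <= j <= t)%N -> 0 < W t j) /\ \sum_(1 <= j < t.+1) W t j = 1.
Proof.
elim: t => // t IH.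
case: (posnP t) => [->|tp] _.
  split; first by move=> j /andP[h1 h2]; have -> : j = 1%N by apply/eqP; rewrite eqn_leq h1 h2.
  by rewrite big_nat1.
have [Hp Hs] := IH tp.
have Zp : 0 < ZZ t.
  rewrite /ZZ big_nat_recl // big_nat_cond.
  apply: ltr_pwDl.
    by apply: mulr_gt0; [apply: Hp; rewrite leqnn tp | exact: expR_gt0].
  apply: sumr_ge0 => i /andP[/andP[h1 h2] _].
  apply: mulr_ge0; last exact: expR_ge0.
  by apply: ltW; apply: Hp; rewrite h2 andbT.
have t1 : (0 < t.+1%:R :> R) by rewrite ltr0n.
split.
  move=> j /andP[j1 jt]; rewrite WS //.
  case: eqP => [_|/eqP jn]; first by rewrite invr_gt0.
  have jt' : (j <= t)%N by rewrite leq_eqVlt in jt; move: jt; rewrite (negPf jn) /= ltnS.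
  rewrite j1 jt' /=.
  apply: mulr_gt0.
    by rewrite subr_gt0 invf_lt1 // ltr1n ltnS.
  apply: divr_gt0 => //; apply: mulr_gt0; [by apply: Hp; rewrite j1 jt' | exact: expR_gt0].
rewrite big_nat_recr // WS // eqxx.
rewrite (eq_big_nat _ _ (F2 := fun i => (1 - (t.+1)%:R^-1) * (W t i * ee t i / ZZ t))); last first.
  move=> i /andP[i1 it]; rewrite WS //.
  rewrite (_ : (i == t.+1) = false); last by apply/negbTE; rewrite neq_ltn it.
  by rewrite i1 /= -ltnS it.
rewrite -mulr_sumr -mulr_suml -/(ZZ t) divff ?mulr1; last by rewrite gt_eqF.
by rewrite /= subrK.
Qed.


Variables (B : R) (T : nat).
Hypothesis ha : 0 < alpha.
Hypothesis hder : forall t x, derivable (ell t) x 1.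
Hypothesis hexp : forall t, (1 <= t <= T)%N ->
  exp_concave_dom alpha (F t) (gradf ell v t) (slab B (v t)).
Hypothesis hslab : forall j t, (1 <= j <= t)%N -> (t <= T)%N -> slab B (v t) (xb j t).

Notation play t := (flh_play alpha F xb t).

Lemma play_slab t : (1 <= t <= T)%N -> slab B (v t) (play t).
Proof.
move=> /andP[t1 tT]; have [Hp Hs] := W_prop _ t1.
rewrite /slab /flh_play dotv_suml.
apply: le_trans (ler_norm_sum _ _ _) _.
rewrite -[X in _ <= X]mul1r -Hs mulr_suml.
apply: ler_sum_nat => j /andP[j1 jt].
rewrite ltnS in jt.
have jp : 0 < W t j by apply: Hp; rewrite j1 jt.
rewrite dotvZl normrM gtr0_norm //.
apply: ler_wpM2l; first exact: ltW.
by apply: hslab => //; rewrite j1 jt.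
Qed.

Lemma mix t : (1 <= t <= T)%N -> ZZ t <= expR (- alpha * F t (play t)).
Proof.
move=> tT; have /andP[t1 tT'] := tT.
have [Hp Hs] := W_prop _ t1.
set xbar := play t.
set g := gradf ell v t xbar.
set E := expR (- alpha * F t xbar).
have conc : forall j, (1 <= j <= t)%N ->
   ee t j <= E * (1 - alpha * dotv (xb j t - xbar) g).
  move=> j jt.
  have h := vec_expconc _ _ _ _ ha (hder t) (hexp _ tT) _ _ (play_slab _ tT) (hslab _ _ jt tT').
  rewrite /ee /E /g /xbar /lossf /gradf. exact: h.
have S : \sum_(1 <= j < t.+1) W t j * dotv (xb j t - xbar) g = 0.
  under eq_bigr do rewrite dotvBl mulrBr.
  rewrite sumrB -mulr_suml Hs mul1r.
  under eq_bigr do rewrite -dotvZl.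
  by rewrite -dotv_suml subrr.
apply: (@le_trans _ _ (\sum_(1 <= j < t.+1) W t j * (E * (1 - alpha * dotv (xb j t - xbar) g)))).
  apply: ler_sum_nat => j /andP[j1 jt]; rewrite ltnS in jt.
  apply: ler_wpM2l; first by apply: ltW; apply: Hp; rewrite j1 jt.
  by apply: conc; rewrite j1 jt.
have -> : \sum_(1 <= j < t.+1) W t j * (E * (1 - alpha * dotv (xb j t - xbar) g)) =
   E * \sum_(1 <= j < t.+1) W t j - E * alpha * \sum_(1 <= j < t.+1) W t j * dotv (xb j t - xbar) g.
  rewrite !mulr_sumr -sumrB; apply: eq_bigr => j _; ring.
by rewrite S Hs mulr0 subr0 mulr1.
Qed.


Lemma ZZ_pos t : (1 <= t)%N -> 0 < ZZ t.
Proof.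
move=> t1; have [Hp _] := W_prop _ t1.
rewrite /ZZ big_nat_recl // big_nat_cond.
apply: ltr_pwDl.
  by apply: mulr_gt0; [apply: Hp; rewrite leqnn t1 | exact: expR_gt0].
apply: sumr_ge0 => i /andP[/andP[h1 h2] _].
apply: mulr_ge0; last exact: expR_ge0.
by apply: ltW; apply: Hp; rewrite h2 andbT.
Qed.

Lemma W_ge0 t i : 0 <= W t i.
Proof.
case: t => [|s] //.
case: (posnP s) => [->|sp]; first by rewrite W1; case: eqP.
rewrite WS //; case: eqP => _; first by rewrite invr_ge0 ler0n.
case: ifP => // /andP[i1 iis].
have [Hp _] := W_prop _ sp.
have Zp := ZZ_pos _ sp.
apply: mulr_ge0.
  rewrite subr_ge0 invf_le1 ?ltr0n // ler1n //.
apply: ltW; apply: divr_gt0 => //; apply: mulr_gt0; last exact: expR_gt0.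
by apply: Hp; rewrite i1 iis.
Qed.

Definition uu r k := ln (W k r) + ln (k%:R : R).

Lemma step t r : (1 <= r <= t)%N -> (t <= T)%N ->
  alpha * (F t (play t) - F t (xb r t)) <= uu r t.+1 - uu r t.
Proof.
move=> /andP[r1 rt] tT.
have t1 : (1 <= t)%N by apply: leq_trans rt.
have [Hp Hs] := W_prop _ t1.
have Wp : 0 < W t r by apply: Hp; rewrite r1 rt.
have Zp := ZZ_pos _ t1.
have ep : 0 < ee t r by exact: expR_gt0.
have tp : (0 < t%:R :> R) by rewrite ltr0n.
have tp1 : (0 < t.+1%:R :> R) by rewrite ltr0n.
have eW : W t.+1 r = (t%:R / t.+1%:R) * (W t r * ee t r / ZZ t).
  rewrite WS // (_ : (r == t.+1) = false); last first.
    by apply/negbTE; rewrite neq_ltn ltnS rt.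
  rewrite r1 rt /=; congr (_ * _).
  have n0 : t.+1%:R != 0 :> R by rewrite gt_eqF.
  rewrite -natr1; field.
  by rewrite natr1.
have pos x : 0 < x -> x \in Num.pos by move=> h; exact: h.
have lW : ln (W t.+1 r) = ln (t%:R) - ln (t.+1%:R) + ln (W t r) + ln (ee t r) - ln (ZZ t).
  rewrite eW lnM ?pos ?divr_gt0 ?mulr_gt0 // ln_div ?pos ?mulr_gt0 //.
  rewrite lnM ?pos // ln_div ?pos //.
  by rewrite !addrA.
have le : ln (ee t r) = - alpha * F t (xb r t) by rewrite /ee expRK.
have tT2 : (1 <= t <= T)%N by rewrite t1 tT.
have hm := mix _ tT2.
have lm : ln (ZZ t) <= - alpha * F t (play t).
  by rewrite -[X in _ <= X]expRK ler_ln ?pos ?expR_gt0.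
rewrite /uu lW le.
have -> : alpha * (F t (play t) - F t (xb r t)) = - (- alpha * F t (play t)) + - alpha * F t (xb r t) by ring.
lra.
Qed.

Lemma adaptive r s : (1 <= r <= s)%N -> (s <= T)%N ->
  alpha * \sum_(r <= t < s.+1) (F t (play t) - F t (xb r t)) <= ln (s.+1%:R : R).
Proof.
move=> /andP[r1 rs] sT.
rewrite mulr_sumr.
apply: (@le_trans _ _ (\sum_(r <= t < s.+1) (uu r t.+1 - uu r t))).
  apply: ler_sum_nat => t /andP[rt ts]; rewrite ltnS in ts.
  apply: step; first by rewrite r1 rt.
  exact: leq_trans ts sT.
rewrite telescope_sumr; last by apply: leq_trans rs _.
have ur : uu r r = 0.
  rewrite /uu; case: r r1 rs => // r' _ _.
  case: (posnP r') => [->|r'p].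
    by rewrite W1 eqxx (_ : (1%:R : R) = 1) // ln1 addr0.
  rewrite WS // eqxx lnV ?posrE ?invr_gt0 ?ltr0n //.
  by rewrite addNr.
have s1 : (1 <= s.+1)%N by [].
have [Hp Hs] := W_prop _ s1.
have Wp : 0 < W s.+1 r by apply: Hp; rewrite r1 (leq_trans rs).
have Wle : W s.+1 r <= 1.
  rewrite -Hs (bigD1_seq r); first last.
  - by rewrite /index_iota; exact: iota_uniq.
  - by rewrite mem_index_iota r1 ltnS (leq_trans rs).
  by rewrite lerDl; apply: sumr_ge0 => i _; exact: W_ge0.
rewrite ur subr0 /uu.
have := ln_le0 Wle; lra.
Qed.

End D.


Section E.
Context {R : realType} {d : nat}.
Notation vec := 'rV[R]_d.
Variables (alpha G c : R) (T : nat) (B : R) (v : nat -> vec) (ell : nat -> R -> R)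
  (xb : nat -> nat -> vec) (z : nat -> vec).
Notation F := (lossf ell v).
Notation play t := (flh_play alpha F xb t).
Hypothesis ha : 0 < alpha.
Hypothesis hG : 0 < G.
Hypothesis hder : forall t x, derivable (ell t) x 1.
Hypothesis hexp : forall t, (1 <= t <= T)%N ->
  exp_concave_dom alpha (F t) (gradf ell v t) (slab B (v t)).
Hypothesis hlip : forall t, (1 <= t <= T)%N -> lip_on_norm G (F t) (slab B (v t)).
Hypothesis hslab : forall j t, (1 <= j <= t)%N -> (t <= T)%N -> slab B (v t) (xb j t).
Hypothesis hbase : forall j t2 (u : vec), (1 <= j <= t2)%N -> (t2 <= T)%N -> Kset B T v u ->
  \sum_(j <= t < t2.+1) (F t (xb j t) - F t u) <= c * (d%:R) ^+ 2 * (1 + ln (T%:R)).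
Hypothesis hz : forall t, (1 <= t <= T)%N -> Kset B T v (z t).

Definition AA := ln (T.+1%:R : R) / alpha + c * (d%:R) ^+ 2 * (1 + ln (T%:R)).

Lemma normv0 : normv (0 : vec) = 0.
Proof. by rewrite /normv dotv0l sqrtr0. Qed.

Lemma chain r t : (r <= t)%N ->
  normv (z r - z t) <= \sum_(r.+1 <= k < t.+1) normv (z k - z k.-1).
Proof.
elim: t => [|t IH].
  by rewrite leqn0 => /eqP ->; rewrite subrr normv0 big_geq.
rewrite leq_eqVlt => /orP[/eqP ->|]; first by rewrite subrr normv0 big_geq.
rewrite ltnS => rt.
rewrite big_nat_recr /=; last by [].
have -> : z r - z t.+1 = (z r - z t) + (z t - z t.+1) by rewrite addrA subrK.
apply: le_trans (normvD _ _) _.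
rewrite (normvB (z t)).
apply: lerD => //; exact: IH.
Qed.


Lemma sum_nonneg_le m n p : (m <= n <= p)%N ->
  \sum_(m <= k < n) normv (z k - z k.-1) <= \sum_(m <= k < p) normv (z k - z k.-1).
Proof.
move=> /andP[mn np]; rewrite (big_cat_nat mn np) /= lerDl.
by apply: sumr_ge0 => i _; exact: normv_ge0.
Qed.

Lemma block r s : (1 <= r <= s)%N -> (s <= T)%N ->
  \sum_(r <= t < s.+1) (F t (play t) - F t (z t)) <=
    AA + G * (s - r)%:R * \sum_(r.+1 <= k < s.+1) normv (z k - z k.-1).
Proof.
move=> /andP[r1 rs] sT.
have rT : (1 <= r <= T)%N by rewrite r1 (leq_trans rs sT).
have rs' : (1 <= r <= s)%N by rewrite r1 rs.
set P := \sum_(r.+1 <= k < s.+1) normv (z k - z k.-1).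
have -> : \sum_(r <= t < s.+1) (F t (play t) - F t (z t)) =
   \sum_(r <= t < s.+1) (F t (play t) - F t (xb r t)) +
   \sum_(r <= t < s.+1) (F t (xb r t) - F t (z r)) +
   \sum_(r <= t < s.+1) (F t (z r) - F t (z t)).
  rewrite -!big_split /=; apply: eq_bigr => t _; ring.
have h1 : \sum_(r <= t < s.+1) (F t (play t) - F t (xb r t)) <= ln (T.+1%:R : R) / alpha.
  have := adaptive alpha ell v xb B T ha hder hexp hslab r s rs' sT.
  move=> h; rewrite ler_pdivlMr // mulrC.
  apply: le_trans h _.
  by rewrite ler_ln ?posrE ?ltr0n // ler_nat ltnS.
have h2 := hbase r s (z r) rs' sT (hz r rT).
have h3 : \sum_(r <= t < s.+1) (F t (z r) - F t (z t)) <= G * (s - r)%:R * P.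
  rewrite big_ltn ?ltnS // subrr add0r.
  apply: (@le_trans _ _ (\sum_(r.+1 <= t < s.+1) (G * P))).
    apply: ler_sum_nat => t /andP[rt ts]; rewrite ltnS in ts.
    have tT : (1 <= t <= T)%N by rewrite (leq_trans r1 (ltnW rt)) (leq_trans ts sT).
    have zr : slab B (v t) (z r) by exact: (hz r rT t tT).
    have zt : slab B (v t) (z t) by exact: (hz t tT t tT).
    have hl := hlip _ tT _ _ zr zt.
    apply: le_trans (ler_norm _) _; apply: le_trans hl _.
    apply: ler_wpM2l; first exact: ltW.
    apply: le_trans (chain _ _ (ltnW rt)) _.
    by apply: sum_nonneg_le; rewrite !ltnS (ltnW rt) ts.
  rewrite sumr_const_nat subSS -mulr_natr le_eqVlt; apply/orP; left; apply/eqP; ring.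
rewrite /AA; lra.
Qed.


Lemma prefix_bound (L : nat) : (1 <= L)%N -> 0 <= AA -> forall n, (n <= T)%N ->
  \sum_(1 <= t < n.+1) (F t (play t) - F t (z t)) <=
  (n%:R / L%:R + 1) * AA + G * (L%:R - 1) * \sum_(2 <= k < n.+1) normv (z k - z k.-1).
Proof.
move=> L1 A0.
have Lp : (0 < L%:R :> R) by rewrite ltr0n.
have GL : 0 <= G * (L%:R - 1).
  by apply: mulr_ge0; [exact: ltW | rewrite subr_ge0 ler1n].
have Wge0 : forall a b, 0 <= \sum_(a <= k < b) normv (z k - z k.-1).
  by move=> a b; apply: sumr_ge0 => i _; exact: normv_ge0.
elim/ltn_ind => n IH nT.
case: (posnP n) => [->|n1].
  rewrite !big_geq // mulr0 addr0 mul0r add0r mul1r; exact: A0.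
have nLA : AA <= (n%:R / L%:R + 1) * AA.
  by rewrite -[X in X <= _]mul1r ler_wpM2r // lerDr divr_ge0.
case: (leqP n L) => nL.
  have b1 : (1 <= 1 <= n)%N by rewrite leqnn n1.
  have hb := block 1 n b1 nT.
  apply: le_trans hb _.
  apply: lerD => //.
  rewrite -!mulrA; apply: ler_wpM2l; first exact: ltW.
  apply: ler_wpM2r; first exact: Wge0.
  by rewrite natrB // lerD2r ler_nat.
set m := (n - L)%N.
have mn : (m < n)%N by rewrite /m ltn_subrL L1 n1.
have m1 : (1 <= m)%N by rewrite /m subn_gt0.
have emn : n = (m + L)%N by rewrite /m subnK // ltnW.
have mT : (m <= T)%N := leq_trans (ltnW mn) nT.
rewrite (@big_cat_nat _ _ _ m.+1) //=; last by rewrite ltnS ltnW.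
have hm := IH m mn mT.
have b1 : (1 <= m.+1 <= n)%N by rewrite mn.
have hb := block m.+1 n b1 nT.
have eL : (n - m.+1)%N = L.-1 by rewrite emn subnS addKn.
rewrite eL in hb.
have ePn : \sum_(2 <= k < n.+1) normv (z k - z k.-1) >=
    \sum_(2 <= k < m.+1) normv (z k - z k.-1) + \sum_(m.+2 <= k < n.+1) normv (z k - z k.-1).
  rewrite [X in _ <= X](@big_cat_nat _ _ _ m.+1) ?ltnS ?m1 ?(ltnW mn) //=.
  rewrite lerD2l (@big_ltn _ _ _ m.+1) ?ltnS // lerDr; exact: normv_ge0.
have eLr : (L.-1%:R : R) = L%:R - 1 by rewrite -[in RHS](prednK L1) -natr1 addrK.
rewrite eLr in hb.
have en : (n%:R / L%:R : R) = m%:R / L%:R + 1.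
  by rewrite emn natrD mulrDl divff // gt_eqF.
rewrite en.
have := ler_wpM2l GL ePn.
nra.
Qed.

End E.


Lemma final_arith (R : realType) (A' G Lam D V AA S : R) (T : nat) :
  0 < A' -> 0 < G -> 1 <= Lam -> 1 <= D -> (1 <= T)%N -> 0 <= V -> 0 <= AA ->
  AA <= A' * D ^+ 2 * Lam ->
  (forall L : nat, (1 <= L)%N -> S <= (T%:R / L%:R + 1) * AA + G * (L%:R - 1) * V) ->
  S <= (3 * A' + G) * Lam ^+ 2 * Num.max (D * Num.sqrt (T%:R * V)) (D ^+ 2).
Proof.
move=> A0 G0 L1 D1 T1 V0 AA0 AAle HS.
set TT := (T%:R : R).
have TT1 : 1 <= TT by rewrite /TT ler1n.
set M := Num.max _ _.
have M1 : D * Num.sqrt (TT * V) <= M by rewrite le_max lexx.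
have M2 : D ^+ 2 <= M by rewrite le_max lexx orbT.
have LL : Lam <= Lam ^+ 2 by rewrite expr2 ler_peMl // (le_trans _ L1).
have C0 : 0 <= 3 * A' + G by lra.
have goalM : forall X, 0 <= X -> X <= M -> (3 * A' + G) * Lam * X <= (3 * A' + G) * Lam ^+ 2 * M.
  move=> X X0 XM; apply: ler_pM => //.
  - by apply: mulr_ge0 => //; lra.
  - by apply: ler_wpM2l.
set s := Num.sqrt (TT * V).
have s0 : 0 <= s := sqrtr_ge0 _.
have ss : s ^+ 2 = TT * V by rewrite sqr_sqrtr // mulr_ge0 //; lra.
case: (lerP (TT * V) (D ^+ 2)) => hTV.
  (* one block *)
  have := HS T T1; rewrite divff ?gt_eqF ?ltr0n // => h.
  apply: le_trans h _.
  apply: le_trans (goalM (D ^+ 2) _ M2); last exact: sqr_ge0.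
  have e1 : G * (TT - 1) * V <= G * D ^+ 2.
    rewrite -mulrA; apply: ler_wpM2l; first lra.
    have : (TT - 1) * V <= TT * V by rewrite mulrBl mul1r lerBlDr lerDl.
    lra.
  have e2 : (1 + 1) * AA <= 2 * (A' * D ^+ 2 * Lam) by lra.
  have e3 : 0 <= A' * D ^+ 2 by apply: mulr_ge0; [lra| exact: sqr_ge0].
  have e4 : G * D ^+ 2 <= G * D ^+ 2 * Lam.
    by rewrite ler_peMr //; apply: mulr_ge0; [lra | exact: sqr_ge0].
  have e5 : A' * D ^+ 2 * Lam <= A' * D ^+ 2 * Lam by [].
  have -> : (3 * A' + G) * Lam * D ^+ 2 = 3 * (A' * D ^+ 2 * Lam) + G * D ^+ 2 * Lam by ring.
  have : 0 <= A' * D ^+ 2 * Lam by apply: mulr_ge0 => //; lra.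
  rewrite /TT in e1 |- *; lra.
have sD : D < s.
  have D0 : 0 <= D by lra.
  rewrite -ss in hTV.
  by rewrite -(ltr_pXn2r (_ : (0 < 2)%N)) ?nnegrE.
have sp : 0 < s by lra.
set y := D * TT / s.
have ys : y * s = D * TT by rewrite /y mulrAC -mulrA divff ?gt_eqF // mulr1.
have y0 : 0 <= y by apply: divr_ge0; [apply: mulr_ge0; lra | exact: ltW].
have XDs : 0 <= D * s by apply: mulr_ge0; lra.
have Ms : D * s <= M by [].
case: (lerP 1 y) => hy.
  have /andP[Ly yL] := truncn_itv y0.
  set L := Num.trunc y in Ly yL.
  have L1' : (1 <= L)%N.
    rewrite lt0n; apply/negP => /eqP L0; move: yL; rewrite L0 /=; lra.
  have Lp : (0 < L%:R :> R) by rewrite ltr0n.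
  have := HS L L1' => h.
  apply: le_trans h _.
  apply: le_trans (goalM (D * s) XDs Ms).
  set q := TT / L%:R.
  have qL : q * L%:R = TT by rewrite /q mulrAC -mulrA divff ?gt_eqF // mulr1.
  have y2L : y <= 2 * L%:R.
    have L1r : (1 <= L%:R :> R) by rewrite ler1n.
    move: yL; rewrite -natr1; lra.
  set r := s / D.
  have rD : r * D = s by rewrite /r mulrAC -mulrA divff ?gt_eqF ?mulr1 //; lra.
  have D0 : 0 < D by lra.
  have q2r : q <= 2 * r.
    have h1 : D * TT <= 2 * L%:R * s.
      rewrite -ys; apply: ler_wpM2r => //; lra.
    have h2 : TT <= 2 * r * L%:R.
      have : D * TT <= D * (2 * r * L%:R).
        have -> : D * (2 * r * L%:R) = 2 * L%:R * (r * D) by ring.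
        by rewrite rD.
      by rewrite ler_pM2l.
    rewrite -qL in h2.
    by rewrite ler_pM2r in h2.
  have hV : (L%:R - 1) * V <= D * s.
    have : (L%:R - 1) * V <= y * V by apply: ler_wpM2r => //; lra.
    have : y * V * s = D * s * s by rewrite mulrAC ys -mulrA -[s * s]expr2 ss; ring.
    move=> e h.
    have : y * V <= D * s.
      have : y * V * s <= D * s * s by rewrite e.
      by rewrite ler_pM2r.
    lra.
  have hA : (q + 1) * AA <= (2 * r + 1) * (A' * D ^+ 2 * Lam).
    apply: ler_pM => //.
    - by apply: addr_ge0 => //; apply: divr_ge0; [lra| exact: ltW].
    - by lra.
  have e : (2 * r + 1) * (A' * D ^+ 2 * Lam) = 2 * A' * Lam * D * (r * D) + A' * Lam * D ^+ 2 by ring.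
  rewrite rD in e.
  have hD2 : D ^+ 2 <= D * s by rewrite expr2 ler_pM2l //; lra.
  have hAL : 0 <= A' * Lam by apply: mulr_ge0; lra.
  have : A' * Lam * D ^+ 2 <= A' * Lam * (D * s) by apply: ler_wpM2l.
  have : G * (L%:R - 1) * V <= G * (D * s) by rewrite -mulrA; apply: ler_wpM2l => //; lra.
  have : G * (D * s) <= G * Lam * (D * s).
    rewrite -subr_ge0 (_ : _ - _ = G * (Lam - 1) * (D * s)); last by ring.
    by apply: mulr_ge0 => //; apply: mulr_ge0; lra.
  move=> h1 h2 h3.
  have -> : (3 * A' + G) * Lam * (D * s) = 2 * A' * Lam * D * s + A' * Lam * (D * s) + G * Lam * (D * s) by ring.
  lra.
(* y < 1 : blocks of length 1 *)
have := HS 1%N (leqnn 1) => h.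
apply: le_trans h _.
apply: le_trans (goalM (D * s) XDs Ms).
rewrite divr1 subrr mulr0 mul0r addr0.
have D0 : 0 < D by lra.
have DT : D * TT <= s by rewrite -ys ger_pMl //; lra.
have hA : (TT + 1) * AA <= (TT + 1) * (A' * D ^+ 2 * Lam) by apply: ler_wpM2l => //; lra.
have e : (TT + TT) * (A' * D ^+ 2 * Lam) = 2 * A' * Lam * D * (D * TT) by ring.
have hAL : 0 <= 2 * A' * Lam * D by apply: mulr_ge0; [apply: mulr_ge0 => //; lra| lra].
have h2 : 2 * A' * Lam * D * (D * TT) <= 2 * A' * Lam * D * s by apply: ler_wpM2l.
have h3 : (TT + 1) * (A' * D ^+ 2 * Lam) <= (TT + TT) * (A' * D ^+ 2 * Lam).
  apply: ler_wpM2r; last lra.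
  apply: mulr_ge0; [apply: mulr_ge0; [lra| exact: sqr_ge0] | lra].
have -> : (3 * A' + G) * Lam * (D * s) = 2 * A' * Lam * D * s + (A' + G) * Lam * (D * s) by ring.
have : 0 <= (A' + G) * Lam * (D * s) by apply: mulr_ge0 => //; apply: mulr_ge0; lra.
lra.
Qed.


Theorem theorem10 (R : realType) (alpha G c : R)
  (halpha : 0 < alpha) (hG : 0 < G) (hc : 0 <= c) :
  exists (C : R) (k : nat), 0 <= C /\
  forall (d T : nat) (B : R) (v : nat -> 'rV[R]_d) (ell : nat -> R -> R)
         (xb : nat -> nat -> 'rV[R]_d),
    0 < B ->
    (* ell_t differentiable with Lipschitz derivative (Lipschitz smooth) *)
    (forall t (x : R), derivable (ell t) x 1) ->
    (exists L : R, forall t (x y : R),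
        `|derive1 (ell t) x - derive1 (ell t) y| <= L * `|x - y|) ->
    (* f_t alpha-exp-concave and G-Lipschitz on K_t = {w : |w^T v_t| <= B} *)
    (forall t, (1 <= t <= T)%N ->
       exp_concave_dom alpha (lossf ell v t) (gradf ell v t) (slab B (v t))) ->
    (forall t, (1 <= t <= T)%N ->
       lip_on_norm G (lossf ell v t) (slab B (v t))) ->
    (* base learners E^j (invariant ONS started at time j): predictions lie in
       K_t and their static regret on [j, t2] against K is O(d^2 log T) *)
    (forall j t, (1 <= j <= t)%N -> (t <= T)%N -> slab B (v t) (xb j t)) ->
    (forall j t2 (u : 'rV[R]_d), (1 <= j <= t2)%N -> (t2 <= T)%N -> Kset B T v u ->
       \sum_(j <= t < t2.+1) (lossf ell v t (xb j t) - lossf ell v t u)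
         <= c * (d%:R) ^+ 2 * (1 + ln (T%:R))) ->
    forall z : nat -> 'rV[R]_d, (forall t, (1 <= t <= T)%N -> Kset B T v (z t)) ->
      \sum_(1 <= t < T.+1)
         (lossf ell v t (flh_play alpha (lossf ell v) xb t) - lossf ell v t (z t))
      <= C * (1 + ln (T%:R)) ^+ k *
         Num.max (d%:R * Num.sqrt (T%:R * path_length z T)) ((d%:R) ^+ 2).
Proof.
have ai : 0 < alpha^-1 by rewrite invr_gt0.
have A0 : 0 < alpha^-1 + c by lra.
exists (3 * (alpha^-1 + c) + G), 2%N; split; first lra.
move=> d T B v ell xb hB hder _ hexp hlip hslab hbase z hz.
set LHS := \sum_(1 <= t < T.+1) _.
have RHS0 : 0 <= (3 * (alpha^-1 + c) + G) * (1 + ln (T%:R)) ^+ 2 *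
         Num.max (d%:R * Num.sqrt (T%:R * path_length z T)) ((d%:R) ^+ 2).
  apply: mulr_ge0; first by apply: mulr_ge0; [lra | exact: sqr_ge0].
  by rewrite le_max sqr_ge0 orbT.
case: (posnP T) => [T0|T1].
  by apply: le_trans RHS0; rewrite /LHS T0 big_geq.
case: (posnP d) => [d0|d1].
  rewrite /LHS big1 //.
  move=> t _; rewrite /lossf.
  have dz : forall w u : 'rV[R]_d, dotv w u = 0.
    move=> w u; rewrite /dotv big1 // => i _.
    by have := leq_trans (ltn_ord i) (eq_leq d0); rewrite ltn0.
  by rewrite !dz subrr.
have Lam1 : 1 <= 1 + ln (T%:R : R).
  by rewrite lerDl ln_ge0 // ler1n.
have D1 : 1 <= (d%:R : R) by rewrite ler1n.
have lnT1 : ln (T.+1%:R : R) <= 1 + ln (T%:R).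
  have hT : (0 < T%:R :> R) by rewrite ltr0n.
  have e : ln (T.+1%:R : R) <= ln (2 * T%:R).
    rewrite ler_ln ?posrE ?ltr0n ?mulr_gt0 //.
    by rewrite -natr1 mulr2n mulrDl mul1r lerD2l ler1n.
  apply: le_trans e _.
  rewrite lnM ?posrE // lerD2r.
  have := le_ln1Dx (_ : -1 < (1 : R)); last by lra.
have lnp : 0 <= ln (T.+1%:R : R) by rewrite ln_ge0 // ler1n.
have AA0 : 0 <= (@AA R d alpha c T).
  rewrite /AA; apply: addr_ge0; first by apply: divr_ge0 => //; exact: ltW.
  apply: mulr_ge0; [apply: mulr_ge0 => //; exact: sqr_ge0 | lra].
have AAle : (@AA R d alpha c T) <= (alpha^-1 + c) * (d%:R) ^+ 2 * (1 + ln (T%:R)).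
  rewrite /AA.
  have d2 : 1 <= (d%:R : R) ^+ 2 by rewrite expr_ge1 //; lra.
  have e1 : ln (T.+1%:R : R) / alpha <= alpha^-1 * ((d%:R) ^+ 2 * (1 + ln T%:R)).
    rewrite mulrC; apply: ler_wpM2l; first by rewrite invr_ge0 ltW.
    apply: le_trans lnT1 _; rewrite ler_peMl //; lra.
  have -> : (alpha^-1 + c) * (d%:R) ^+ 2 * (1 + ln (T%:R)) =
     alpha^-1 * ((d%:R) ^+ 2 * (1 + ln T%:R)) + c * (d%:R) ^+ 2 * (1 + ln (T%:R)) by ring.
  lra.
apply: (@final_arith R (alpha^-1 + c) G _ _ (path_length z T) _ LHS T A0 hG Lam1 D1 T1 _ AA0 AAle).
  by apply: sumr_ge0 => i _; exact: normv_ge0.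
move=> L L1.
exact: (prefix_bound alpha G c T B v ell xb z halpha hG hder hexp hlip hslab hbase hz L L1 AA0 T (leqnn T)).
Qed.
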